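(* Let $\mu,h\ge2$ be integers. Put $X=\{0,1\}$, $n=h(h-1)\mu+1$, $A^*=\{x\in\mathbb{Z}_{\ge0}: x\bmod n\in\{\mu,h\mu\}\}$ and $A=A^*\cup X$. Then $\mu(A,X)=\mu$, $A^*=A\setminus X$ is an asymptotic basis with $G(A\setminus X)=h(h-1)\mu$, and $A$ is an asymptotic basis with $G(A)\le 2h+\mu-4$.
   Context: A set $A\subseteq\mathbb{Z}$ with $|A\cap\mathbb{Z}_{<0}|<\infty$ is an asymptotic basis if for some positive integer $h$ the $h$-fold sumset $hA=\{a_1+\dots+a_h: a_i\in A\}$ contains all but finitely many non-negative integers; the least such $h$ is the order $G(A)$. For a finite set $Y$ of integers, $\mathrm{diam}(Y)=\max Y-\min Y$, and for $X\subseteq A$ finite, $\mu(A,X)=\min_{y\in A\setminus X}\mathrm{diam}(X\cup\{y\})$. *)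

(* Defs.v *)
From Stdlib Require Import ZArith List.
Import ListNotations.
Open Scope Z_scope.

Fixpoint sumset (A : Z -> Prop) (h : nat) : Z -> Prop :=
  match h with
  | O => fun x => x = 0
  | S k => fun x => exists a b, A a /\ sumset A k b /\ x = a + b
  end.

Definition finitely_many_negatives (A : Z -> Prop) : Prop :=
  exists l : list Z, forall a, A a -> a < 0 -> In a l.

Definition basis_of_order (A : Z -> Prop) (h : nat) : Prop :=
  (exists N : Z, forall x, N <= x -> sumset A h x).

Definition asymptotic_basis (A : Z -> Prop) : Prop :=
  finitely_many_negatives A /\ exists h : nat, (1 <= h)%nat /\ basis_of_order A h.

Definition order_eq (A : Z -> Prop) (g : nat) : Prop :=
  asymptotic_basis A /\ (1 <= g)%nat /\ basis_of_order A g /\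
  forall h : nat, (1 <= h)%nat -> (h < g)%nat -> ~ basis_of_order A h.

Definition order_le (A : Z -> Prop) (m : nat) : Prop :=
  asymptotic_basis A /\ exists g : nat, (1 <= g)%nat /\ (g <= m)%nat /\ order_eq A g.

(* diam of a finite nonempty set, given as list x :: l *)
Definition diam (x : Z) (l : list Z) : Z :=
  fold_right Z.max x l - fold_right Z.min x l.

Definition mu_eq (A : Z -> Prop) (X : list Z) (m : Z) : Prop :=
  (exists y, A y /\ ~ In y X /\ diam y X = m) /\
  (forall y, A y -> ~ In y X -> m <= diam y X).

Definition setminus (A : Z -> Prop) (X : list Z) : Z -> Prop :=
  fun x => A x /\ ~ In x X.

(* Main.v *)
Require Import Defs.
From Stdlib Require Import ZArith List Lia Classical FunctionalExtensionality PropExtensionality Wf_nat.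
Import ListNotations.
Open Scope Z_scope.

Lemma sumset_add (A : Z -> Prop) a b x y :
  sumset A a x -> sumset A b y -> sumset A (a + b) (x + y).
Proof.
  revert x; induction a as [|a IH]; simpl; intros x Hx Hy.
  - subst; simpl; exact Hy.
  - destruct Hx as [a0 [b0 [Ha [Hb ->]]]].
    exists a0, (b0 + y). split; [exact Ha|]. split; [apply IH; auto| ring].
Qed.

Lemma sumset_rep (A : Z -> Prop) k e : A e -> sumset A k (Z.of_nat k * e).
Proof.
  intros He; induction k as [|k IH].
  - reflexivity.
  - rewrite Nat2Z.inj_succ. simpl. exists e, (Z.of_nat k * e). split; [exact He|]. split; [exact IH|]. ring.
Qed.

Lemma sumset_mono (P Q : Z -> Prop) k x :
  (forall y, P y -> Q y) -> sumset P k x -> sumset Q k x.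
Proof.
  intros H; revert x; induction k as [|k IH]; simpl; intros x Hx; auto.
  destruct Hx as [a [b [Ha [Hb ->]]]]. exists a, b. auto.
Qed.

Lemma least_exists (P : nat -> Prop) m : P m ->
  exists g, P g /\ (g <= m)%nat /\ forall k, (k < g)%nat -> ~ P k.
Proof.
  induction m as [m IH] using lt_wf_ind. intros Hm.
  destruct (classic (exists k, (k < m)%nat /\ P k)) as [[k [Hk Pk]]|Hn].
  - destruct (IH k Hk Pk) as [g [Pg [Hg Hl]]]. exists g. repeat split; auto; lia.
  - exists m. repeat split; auto. intros k Hk Pk. apply Hn. eauto.
Qed.

Section S.
Variables mu h : Z.
Hypothesis hmu : 2 <= mu.
Hypothesis hh : 2 <= h.
Let n := h * (h - 1) * mu + 1.
Let g := h * (h - 1) * mu.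
Let AS := fun x : Z => 0 <= x /\ (x mod n = mu \/ x mod n = h * mu).
Let AA := fun x : Z => AS x \/ In x [0;1].

Lemma n_pos : 0 < n.
Proof. unfold n. nia. Qed.

Lemma hmu_lt : h * mu < n.
Proof. unfold n. nia. Qed.

Lemma AS_mu q : 0 <= q -> AS (mu + n * q).
Proof.
  intros Hq. pose proof n_pos. pose proof hmu_lt. split; [nia|left].
  rewrite (Z.mul_comm n q), Z.mod_add by lia. apply Z.mod_small. nia.
Qed.

Lemma AS_hmu q : 0 <= q -> AS (h * mu + n * q).
Proof.
  intros Hq. pose proof n_pos. pose proof hmu_lt. split; [nia|right].
  rewrite (Z.mul_comm n q), Z.mod_add by lia. apply Z.mod_small. nia.
Qed.

Lemma AS_sumZ i j Q : 0 <= i -> 0 <= j -> 1 <= i + j -> 0 <= Q ->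
  sumset AS (Z.to_nat (i + j)) (i * mu + j * (h * mu) + n * Q).
Proof.
  intros Hi Hj Hij HQ.
  destruct (Z_le_gt_dec 1 i) as [Hi1|Hi0].
  - replace (Z.to_nat (i + j)) with (S (Z.to_nat (i - 1) + Z.to_nat j)) by lia.
    simpl. exists (mu + n * Q), ((i-1) * mu + j * (h * mu)).
    split; [apply AS_mu; auto|]. split; [|ring].
    rewrite <- (Z2Nat.id (i-1)) at 2 by lia. rewrite <- (Z2Nat.id j) at 2 by lia.
    apply sumset_add; apply sumset_rep.
    + pose proof (AS_mu 0 ltac:(lia)) as H0; rewrite Z.mul_0_r, Z.add_0_r in H0; exact H0.
    + pose proof (AS_hmu 0 ltac:(lia)) as H0; rewrite Z.mul_0_r, Z.add_0_r in H0; exact H0.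
  - replace (Z.to_nat (i + j)) with (S (Z.to_nat i + Z.to_nat (j - 1))) by lia.
    simpl. exists (h * mu + n * Q), (i * mu + (j - 1) * (h * mu)).
    split; [apply AS_hmu; auto|]. split; [|ring].
    rewrite <- (Z2Nat.id i) at 2 by lia. rewrite <- (Z2Nat.id (j-1)) at 2 by lia.
    apply sumset_add; apply sumset_rep.
    + pose proof (AS_mu 0 ltac:(lia)) as H0; rewrite Z.mul_0_r, Z.add_0_r in H0; exact H0.
    + pose proof (AS_hmu 0 ltac:(lia)) as H0; rewrite Z.mul_0_r, Z.add_0_r in H0; exact H0.
Qed.

Lemma g_ge : 2 <= g.
Proof. unfold g. nia. Qed.
Lemma ng : n = g + 1.
Proof. unfold n, g. ring. Qed.

Lemma AS_basis : basis_of_order AS (Z.to_nat g).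
Proof.
  pose proof n_pos as Hn. pose proof g_ge as Hg. pose proof ng as Hng.
  exists (mu * g * h). intros x Hx.
  set (r := (x mod n)).
  set (K := h * h * (h - 1) * mu).
  set (J := (((r - g * mu) * K) mod n)).
  set (qq := ((r - g * mu) * K) / n).
  set (X1 := x / n).
  assert (Hr : x = n * X1 + r) by (apply Z.div_mod; lia).
  assert (Hrb : 0 <= r < n) by (apply Z.mod_pos_bound; lia).
  assert (HJ : (r - g * mu) * K = n * qq + J) by (apply Z.div_mod; lia).
  assert (HJb : 0 <= J < n) by (apply Z.mod_pos_bound; lia).
  set (Q := X1 - (r - g * mu) * (g - 1) + mu * (h - 1) * qq).
  assert (HQ : x - g * mu - J * (h - 1) * mu = n * Q).
  { assert (Hq : n * qq = (r - g * mu) * K - J) by lia.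
    unfold Q.
    replace (n * (X1 - (r - g * mu) * (g - 1) + mu * (h - 1) * qq))
      with (n * X1 - n * (r - g * mu) * (g - 1) + mu * (h - 1) * (n * qq)) by ring.
    rewrite Hq. rewrite Hr at 1. unfold K, n, g. ring. }
  assert (HQ0 : 0 <= Q).
  { assert (H1 : J * (h - 1) * mu <= g * (h - 1) * mu).
    { apply Z.mul_le_mono_nonneg_r; [lia|]. apply Z.mul_le_mono_nonneg_r; lia. }
    assert (H2 : g * mu + g * (h - 1) * mu = mu * g * h) by ring.
    apply (Z.mul_nonneg_cancel_l n Q Hn). lia. }
  replace (Z.to_nat g) with (Z.to_nat ((g - J) + J)) by (f_equal; ring).
  replace x with ((g - J) * mu + J * (h * mu) + n * Q).
  2: { rewrite <- HQ. ring. }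
  apply AS_sumZ; lia.
Qed.

Lemma AS_form k x : sumset AS k x ->
  exists j q, 0 <= j <= Z.of_nat k /\ x = mu * (Z.of_nat k + j * (h - 1)) + n * q.
Proof.
  pose proof n_pos as Hn.
  revert x; induction k as [|k IH]; intros x Hx.
  - simpl in Hx. exists 0, 0. simpl. lia.
  - destruct Hx as [a [b [[Ha0 Ha] [Hb ->]]]].
    destruct (IH b Hb) as [j [q [Hj ->]]].
    assert (Hd : a = n * (a / n) + a mod n) by (apply Z.div_mod; lia).
    rewrite Nat2Z.inj_succ.
    destruct Ha as [Ha|Ha]; rewrite Ha in Hd.
    + exists j, (a / n + q). split; [lia|]. rewrite Hd at 1. ring.
    + exists (j + 1), (a / n + q). split; [lia|]. rewrite Hd at 1. ring.
Qed.

Lemma AS_notbasis k : (1 <= k)%nat -> (k < Z.to_nat g)%nat -> ~ basis_of_order AS k.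
Proof.
  pose proof n_pos as Hn. pose proof g_ge as Hg. pose proof ng as Hng.
  intros Hk1 Hkg [N HN].
  set (k' := Z.of_nat k).
  assert (Hk' : 1 <= k' < g) by (unfold k'; lia).
  set (M := Z.abs N + mu * h).
  set (x := mu * (k' - (h - 1)) + n * M).
  assert (HxN : N <= x).
  { assert (HM : 0 <= M).
    { unfold M. assert (0 <= mu * h) by (apply Z.mul_nonneg_nonneg; lia). lia. }
    assert (H1 : n * M >= M).
    { assert (0 <= (n - 1) * M) by (apply Z.mul_nonneg_nonneg; lia).
      rewrite Z.mul_sub_distr_r in H. lia. }
    assert (H2 : mu * (k' - (h - 1)) >= - (mu * h)).
    { assert (0 <= mu * k') by (apply Z.mul_nonneg_nonneg; lia).
      rewrite Z.mul_sub_distr_l. rewrite Z.mul_sub_distr_l. lia. }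
    unfold x. clearbody n. unfold M in H1. lia. }
  destruct (AS_form k x (HN x HxN)) as [j [q [Hj Hx]]].
  fold k' in Hj, Hx. unfold x in Hx.
  assert (E : mu * (h - 1) * (j + 1) = n * (M - q)) by lia.
  assert (E2 : g * (j + 1) = n * h * (M - q)).
  { unfold g. replace (h * (h - 1) * mu * (j + 1)) with (h * (mu * (h - 1) * (j + 1))) by ring.
    rewrite E. ring. }
  set (z := j + 1 - h * (M - q)).
  assert (E3 : j + 1 = n * z).
  { unfold z. rewrite Hng in E2 |- *.
    replace ((g + 1) * (j + 1 - h * (M - q))) with ((g+1)*(j+1) - (g + 1) * h * (M - q)) by ring.
    lia. }
  destruct (Z_le_gt_dec z 0).
  - assert (n * z <= 0) by (apply Z.mul_nonneg_nonpos; lia). lia.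
  - assert (n * (z - 1) >= 0) by (apply Z.le_ge, Z.mul_nonneg_nonneg; lia).
    rewrite Z.mul_sub_distr_l in H. lia.
Qed.

Lemma AA_sum m c i j Q : 0 <= c -> 0 <= i -> 0 <= j -> 1 <= i + j -> c + i + j <= m -> 0 <= Q ->
  sumset AA (Z.to_nat m) (c + i * mu + j * (h * mu) + n * Q).
Proof.
  intros Hc Hi Hj Hij Hm HQ.
  replace (Z.to_nat m) with ((Z.to_nat c + Z.to_nat (i + j)) + Z.to_nat (m - c - i - j))%nat by lia.
  replace (c + i * mu + j * (h * mu) + n * Q)
    with ((Z.of_nat (Z.to_nat c) * 1 + (i * mu + j * (h * mu) + n * Q))
          + Z.of_nat (Z.to_nat (m - c - i - j)) * 0) by lia.
  apply sumset_add; [apply sumset_add|].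
  - apply sumset_rep. right. simpl; auto.
  - apply (sumset_mono AS). { intros y Hy; left; exact Hy. } apply AS_sumZ; lia.
  - apply sumset_rep. right. simpl; auto.
Qed.

Lemma AA_basis : basis_of_order AA (Z.to_nat (2 * h + mu - 4)).
Proof.
  pose proof n_pos as Hn. pose proof g_ge as Hg. pose proof ng as Hng.
  exists (2 * n). intros x Hx.
  set (r := (x mod n)). set (X1 := x / n).
  assert (Hr : x = n * X1 + r) by (apply Z.div_mod; lia).
  assert (Hrb : 0 <= r < n) by (apply Z.mod_pos_bound; lia).
  assert (HX1 : 2 <= X1).
  { destruct (Z_le_gt_dec 2 X1) as [|Hl]; [auto|].
    assert (n * X1 <= n * 1) by (apply Z.mul_le_mono_nonneg_l; lia). lia. }
  set (c := r mod mu). set (t := r / mu).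
  assert (Hrt : r = mu * t + c) by (apply Z.div_mod; lia).
  assert (Hcb : 0 <= c < mu) by (apply Z.mod_pos_bound; lia).
  set (i := t mod h). set (jj := t / h).
  assert (Hti : t = h * jj + i) by (apply Z.div_mod; lia).
  assert (Hib : 0 <= i < h) by (apply Z.mod_pos_bound; lia).
  assert (Ht0 : 0 <= t) by (apply Z.div_pos; lia).
  assert (Htb : t <= h * (h - 1)).
  { apply (Z.mul_le_mono_pos_l _ _ mu); [lia|].
    replace (mu * (h * (h - 1))) with g by (unfold g; ring). lia. }
  assert (Hj0 : 0 <= jj) by (apply Z.div_pos; lia).
  assert (Hjb : jj <= h - 1).
  { apply (Z.mul_le_mono_pos_l _ _ h); [lia|]. lia. }
  assert (Hij : i + jj <= 2 * h - 3).
  { destruct (Z.eq_dec jj (h - 1)) as [E|E].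
    - rewrite E in Hti. assert (i <= 0) by lia. lia.
    - lia. }
  destruct (Z_le_gt_dec 1 t) as [Ht1|Ht1].
  - assert (1 <= i + jj).
    { destruct (Z_le_gt_dec 1 jj); [lia|]. assert (jj = 0) by lia. subst jj. lia. }
    replace x with (c + i * mu + jj * (h * mu) + n * X1) by lia.
    apply AA_sum; lia.
  - assert (t = 0) by lia.
    assert (Hrc : r = c) by (rewrite Hrt; replace t with 0 by lia; ring).
    destruct (Z_le_gt_dec 3 h) as [H3|H3]; [|destruct (Z_le_gt_dec c (mu - 2)) as [Hc2|Hc2]].
    + replace x with ((c + 1) + 0 * mu + (h - 1) * (h * mu) + n * (X1 - 1)).
      2: { rewrite Hr, Hrc. unfold n. ring. }
      apply AA_sum; lia.
    + replace x with ((c + 1) + 0 * mu + (h - 1) * (h * mu) + n * (X1 - 1)).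
      2: { rewrite Hr, Hrc. unfold n. ring. }
      apply AA_sum; lia.
    + assert (h = 2) by lia. assert (c = mu - 1) by lia.
      replace x with (0 + 1 * mu + 1 * (h * mu) + n * (X1 - 1)).
      2: { rewrite Hr, Hrc. unfold n. subst h. replace c with (mu - 1) by lia. ring. }
      apply AA_sum; lia.
Qed.
End S.

Lemma As_nonneg (P : Z -> Prop) : (forall x, P x -> 0 <= x) -> finitely_many_negatives P.
Proof. intros H. exists []. intros a Ha Hn. specialize (H a Ha). lia. Qed.

Theorem mainTheorem8 (mu h : Z) (hmu : 2 <= mu) (hh : 2 <= h) :
  let X := [0; 1] in
  let n := h * (h - 1) * mu + 1 in
  let Astar := fun x : Z => 0 <= x /\ (x mod n = mu \/ x mod n = h * mu) in
  let A := fun x : Z => Astar x \/ In x X in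
  mu_eq A X mu /\
  (forall x, Astar x <-> setminus A X x) /\
  order_eq (setminus A X) (Z.to_nat (h * (h - 1) * mu)) /\
  order_le A (Z.to_nat (2 * h + mu - 4)).
Proof.
  intros X n Astar A.
  assert (Hn : 0 < n) by (apply (n_pos mu h); lia).
  assert (Hlt : h * mu < n) by (apply (hmu_lt mu h); lia).
  assert (Hmn : mu < n) by nia.
  assert (Hst : forall x, Astar x -> mu <= x).
  { intros x [H0 [E|E]].
    - rewrite <- E. apply Z.mod_le; lia.
    - assert (x mod n <= x) by (apply Z.mod_le; lia). nia. }
  assert (P2 : forall x, Astar x <-> setminus A X x).
  { intros x; split.
    - intros H. split; [left; exact H|]. specialize (Hst x H). simpl. lia.
    - intros [[H|H] H']; [exact H| contradiction]. }
  assert (AS_eq : setminus A X = Astar).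
  { apply functional_extensionality; intros x. apply propositional_extensionality.
    split; apply P2. }
  split; [|split; [exact P2|split]].
  - split.
    + exists mu. split; [left; split; [lia|left; apply Z.mod_small; lia]|].
      split; [simpl; lia|]. unfold diam; simpl. lia.
    + intros y [Hy|Hy] Hy'; [|contradiction].
      specialize (Hst y Hy). unfold diam; simpl. lia.
  - rewrite AS_eq.
    split; [split|split; [|split]].
    + apply As_nonneg. intros x Hx; apply Hx.
    + exists (Z.to_nat (h * (h - 1) * mu)). split; [nia|].
      apply (AS_basis mu h); lia.
    + nia.
    + apply (AS_basis mu h); lia.
    + intros k Hk1 Hk2. apply (AS_notbasis mu h); lia || auto.
  - assert (HA : forall x, A x -> 0 <= x).
    { intros x [Hx|Hx]. apply Hx. simpl in Hx. lia. }
    assert (Hb : basis_of_order A (Z.to_nat (2 * h + mu - 4))) by (apply (AA_basis mu h); lia).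
    split; [split; [apply As_nonneg; exact HA| exists (Z.to_nat (2 * h + mu - 4)); split; [lia|exact Hb]]|].
    destruct (least_exists (fun k => (1 <= k)%nat /\ basis_of_order A k) (Z.to_nat (2 * h + mu - 4)))
      as [g0 [[Hg1 Hgb] [Hgm Hgl]]]; [split; [lia|exact Hb]|].
    exists g0. split; [exact Hg1|]. split; [exact Hgm|].
    split; [split; [apply As_nonneg; exact HA| exists g0; split; auto]|].
    split; [exact Hg1|]. split; [exact Hgb|].
    intros k Hk1 Hk2 Hk. apply (Hgl k Hk2). split; auto.
Qed.
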